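(* Let $a>0$, $b\in\mathbb{R}$, $C>0$ with $b=2a'C^2$ (where $a'\in\mathbb{R}$), and $\omega=a^2/4$. Let $\alpha=a+b/2$, $\beta=b/2$, let $k_\pm(\lambda)=\sqrt{-\omega\mp i\lambda}$ be the branches analytic on $\mathbb{C}\setminus\mathcal{C}_\pm$ with $\operatorname{Im}k_\pm(\lambda)>0$ there, where $\mathcal{C}_+=[i\omega,i\infty)$, $\mathcal{C}_-=(-i\infty,-i\omega]$, and let $$ D(\lambda)=\alpha^2+2i\alpha(k_++k_-)-4k_+k_--\beta^2,\qquad \lambda\in\mathbb{C}\setminus(\mathcal{C}_+\cup\mathcal{C}_-). $$ If $a'=a/C^2$ then $\lambda=0$ is a zero of $D$ of multiplicity $4$; otherwise $\lambda=0$ is a zero of $D$ of multiplicity $2$.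
   Context: $D(\lambda)$ is the determinant whose zeros give the poles of the resolvent of the linearization $\mathbf C$ at the solitary wave $Ce^{-\sqrt\omega|x|}$, with $a=a(C^2)$, $a'=a'(C^2)$. *)

(* Defs.v *)
From mathcomp Require Import all_boot all_order all_algebra.
From mathcomp Require Import all_classical all_reals all_analysis.
From mathcomp Require Export complex.
Export Order.TTheory GRing.Theory Num.Theory numFieldNormedType.Exports.

Set Implicit Arguments.
Unset Strict Implicit.
Unset Printing Implicit Defensive.

Local Open Scope ring_scope.
Local Open Scope complex_scope.

(* The square-root branch with positive imaginary part:
   for z = x + i y not in [0, +oo), csqrt_up z is the unique w with
   w^2 = z and Im w > 0 (branch cut along [0,+oo)).
   Explicitly w = (sgn y) sqrt((|z|+x)/2) + i sqrt((|z|-x)/2). *)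
Definition csqrt_up (R : realType) (z : R[i]) : R[i] :=
  let x : R := complex.Re z in
  let y : R := complex.Im z in
  let m := Num.sqrt (x ^+ 2 + y ^+ 2) in
  let s := Num.sqrt ((m + x) / 2) in
  let t := Num.sqrt ((m - x) / 2) in
  (if 0 <= y then s else - s) +i* t.

Definition kplus (R : realType) (omega : R) (lam : R[i]) : R[i] :=
  csqrt_up (- (omega%:C) - 'i * lam).

Definition kminus (R : realType) (omega : R) (lam : R[i]) : R[i] :=
  csqrt_up (- (omega%:C) + 'i * lam).

Definition Dfun (R : realType) (a b : R) (lam : R[i]^o) : R[i]^o :=
  let alpha : R[i] := (a + b / 2)%:C in
  let beta : R[i] := (b / 2)%:C in
  let omega : R := a ^+ 2 / 4 in
  let kp := kplus omega lam in
  let km := kminus omega lam in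
  alpha ^+ 2 + 2%:R * 'i * alpha * (kp + km) - 4%:R * kp * km - beta ^+ 2.

Definition zero_of_multiplicity (R : realType) (f : R[i]^o -> R[i]^o)
    (z0 : R[i]^o) (n : nat) : Prop :=
  (\forall z \near z0, derivable f z 1) /\
  (forall k : nat, (k < n)%N -> derive1n k f z0 = 0) /\
  derive1n n f z0 != 0.

(* Main.v *)
Require Import Defs.
From mathcomp Require Import all_boot all_order all_algebra.
From mathcomp Require Import all_classical all_reals all_analysis.
From mathcomp Require Import complex.
From mathcomp Require Import ring lra.
Local Open Scope ring_scope.
Local Open Scope complex_scope.
Local Open Scope classical_set_scope.
Section S.
Variable R : realType.
Local Notation C := (R[i]^o).

Lemma csqrt_up_sq (z : R[i]) : csqrt_up z ^+ 2 = z.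
Proof.
case: z => x y; rewrite /csqrt_up /=.
set m := Num.sqrt (x ^+ 2 + y ^+ 2).
have hm : `|x| <= m by rewrite /m -sqrtr_sqr; apply: ler_wsqrtr; rewrite lerDl; exact: sqr_ge0.
have h1 : 0 <= (m + x) / 2 by rewrite divr_ge0 //; move: hm; rewrite ler_norml; lra.
have h2 : 0 <= (m - x) / 2 by rewrite divr_ge0 //; move: hm; rewrite ler_norml; lra.
have hm2 : m ^+ 2 = x ^+ 2 + y ^+ 2 by rewrite /m sqr_sqrtr // addr_ge0 // sqr_ge0.
have hst : Num.sqrt ((m + x) / 2) * Num.sqrt ((m - x) / 2) = `|y| / 2.
  rewrite -sqrtrM // (_ : _ * _ = (y / 2) ^+ 2); last first.
    by rewrite -[LHS]/(((m+x)/2) * ((m-x)/2)); rewrite exprMn; rewrite -[y^+2]addr0 -[y ^+ 2]add0r; nra.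
  by rewrite sqrtr_sqr normrM; congr (_ * _); rewrite ger0_norm // invr_ge0.
have e1 := sqr_sqrtr h1; have e2 := sqr_sqrtr h2.
case: ifP => hy; rewrite expr2 /=; apply/eqP; rewrite eq_complex /=; apply/andP; split; apply/eqP.
all: move: e1 e2 hst; rewrite !expr2.
all: set s := Num.sqrt ((m + x) / 2); set t := Num.sqrt ((m - x) / 2) => e1 e2 hst.
- by rewrite e1 e2; field.
- by rewrite [t * s]mulrC hst ger0_norm //; field.
- by rewrite mulrNN e1 e2; field.
- rewrite mulrN mulNr [t * s]mulrC hst ltr0_norm; last by rewrite ltNge hy.
  by field.
Qed.
Lemma Im_le_norm (w : R[i]) : (complex.Im w)%:C <= `|w|.
Proof.
rewrite normc_def lecR; apply: (le_trans (ler_norm _)).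
rewrite -sqrtr_sqr; apply: ler_wsqrtr; rewrite lerDr; exact: sqr_ge0.
Qed.

Lemma sq_cont (g h : C -> C) (z0 : C) :
  (forall z, g z ^+ 2 = h z) -> (forall z, 0 <= complex.Im (g z)) ->
  0 < complex.Im (g z0) -> {for z0, continuous h} -> {for z0, continuous g}.
Proof.
move=> gh gIm g0Im hc.
set c := complex.Im (g z0).
have c0 : 0 < c%:C :> R[i] by rewrite ltcR.
have lb z : c%:C <= `|g z + g z0|.
  apply: le_trans (Im_le_norm _); rewrite lecR raddfD /= lerDr; exact: gIm.
have nz z : g z + g z0 != 0.
  apply/negP => /eqP e; move: (lb z); rewrite e normr0 => /(lt_le_trans c0).
  by rewrite ltxx.
have diffq z : g z0 - g z = (h z0 - h z) / (g z + g z0).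
  by rewrite -!gh; apply/esym/(canLR (mulfK (nz z))); rewrite !expr2; ring.
apply/(@cvgrPdist_lt _ _ _ (nbhs z0) (nbhs_filter z0)) => e e0.
have := (@cvgrPdist_lt _ _ _ (nbhs z0) (nbhs_filter z0) _ _).1 hc (e * c%:C).
rewrite mulr_gt0 // => /(_ isT).
apply: filter_app; near=> z => hz.
rewrite diffq normrM normfV -/(_ / _) ltr_pdivrMr ?(lt_le_trans c0 (lb z))//.
apply: (lt_le_trans hz); apply: ler_wpM2l; [exact: ltW|exact: lb].
Unshelve. all: by end_near.
Qed.

Lemma scC (a x : C) : a *: x = a * x.
Proof. by []. Qed.

Lemma sq_deriv (g h : C -> C) (z0 dh : C) :
  (forall z, g z ^+ 2 = h z) -> (forall z, 0 <= complex.Im (g z)) ->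
  0 < complex.Im (g z0) ->
  is_derive z0 (1 : C) h dh -> is_derive z0 (1 : C) g (dh / (2 * g z0)).
Proof.
move=> gh gIm g0Im hd.
set c := complex.Im (g z0).
have c0 : 0 < c%:C :> R[i] by rewrite ltcR.
have lb z : c%:C <= `|g z + g z0|.
  apply: le_trans (Im_le_norm _); rewrite lecR raddfD /= lerDr; exact: gIm.
have nz z : g z + g z0 != 0.
  apply/negP => /eqP e; move: (lb z); rewrite e normr0 => /(lt_le_trans c0).
  by rewrite ltxx.
have hc : {for z0, continuous h}.
  apply/differentiable_continuous/derivable1_diffP; exact: ex_derive.
have gc := sq_cont _ _ _ gh gIm g0Im hc.
have hq : (fun t : C => t^-1 *: ((h \o shift z0) (t *: (1 : C)) - h z0)) @ 0^' --> dh.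
  by case: hd => hd1 <-.
have aff : (fun t : C => t *: (1 : C) + z0) @ (0 : C) --> z0.
  have -> : (fun t : C => t *: (1 : C) + z0) = (fun t : C => t + z0).
    by apply/funext => t; rewrite scC mulr1.
  rewrite -[X in _ --> X]add0r; exact: (cvgD cvg_id (cvg_cst _)).
have gq : (fun t : C => g (t *: (1 : C) + z0)) @ 0^' --> g z0.
  have H : (fun t : C => g (t *: (1:C) + z0)) @ (0:C) --> g z0.
    exact: (cvg_trans (cvg_app g aff) gc).
  exact: cvg_within_filter H.
have key : (fun t : C => t^-1 *: ((g \o shift z0) (t *: (1 : C)) - g z0)) =
   (fun t : C => (t^-1 *: ((h \o shift z0) (t *: (1 : C)) - h z0)) *
        (g (t *: (1 : C) + z0) + g z0)^-1).
  apply/funext => t /=; rewrite !scC -!gh.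
  apply/(canRL (mulfK (nz _))). rewrite !expr2; ring.
have lim1 : (fun t : C => t^-1 *: ((g \o shift z0) (t *: (1 : C)) - g z0)) @ 0^'
   --> dh / (2 * g z0).
  have lim2 : (fun t : C => (g (t *: (1 : C) + z0) + g z0)^-1) @ 0^' --> (2 * g z0)^-1.
    have n2 : g z0 + g z0 != 0 by exact: nz.
    rewrite mulr_natl mulr2n.
    exact: (cvgV n2 (cvgD gq (cvg_cst _))).
  rewrite key. exact: (cvgM hq lim2).
split; first exact: cvgP lim1.
exact: cvg_lim lim1.
Qed.

Lemma is_deriveV' (f : C -> C) (l df : C) : f l != 0 -> is_derive l (1 : C) f df ->
  is_derive l (1 : C) (fun y => (f y)^-1) (- (f l)^-2 * df).
Proof.
move=> fl0 [d1 d2]; split; first exact: derivableV.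
by rewrite deriveV // d2.
Qed.

Lemma is_deriveX' (f : C -> C) (l df : C) (n : nat) : is_derive l (1 : C) f df ->
  is_derive l (1 : C) (fun y => f y ^+ n) (n%:R * f l ^+ n.-1 * df).
Proof. by move=> h; have := is_deriveX n h; rewrite exprfctE. Qed.

Lemma is_deriveMc (f : C -> C) (l df c : C) : is_derive l (1 : C) f df ->
  is_derive l (1 : C) (fun y => c * f y) (c * df).
Proof. by move=> h; exact: (is_deriveZ c h). Qed.

Lemma is_deriveM' (f g : C -> C) (l df dg : C) : is_derive l (1 : C) f df ->
  is_derive l (1 : C) g dg ->
  is_derive l (1 : C) (fun y => f y * g y) (f l * dg + g l * df).
Proof. by move=> h1 h2; have := is_deriveM h1 h2; rewrite mulrfctE. Qed.

Lemma is_deriveD' (f g : C -> C) (l df dg : C) : is_derive l (1 : C) f df ->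
  is_derive l (1 : C) g dg ->
  is_derive l (1 : C) (fun y => f y + g y) (df + dg).
Proof. by move=> h1 h2; have := is_deriveD h1 h2; rewrite addrfctE. Qed.

Definition fx (u : C) (e : nat) : C := if e is e'.+1 then (u ^+ e')^-1 else u.
Definition tm := (C * nat * nat)%type.
Definition evt (x y : C) (t : tm) : C := t.1.1 * fx x t.1.2 * fx y t.2.
Fixpoint evL (x y : C) (L : seq tm) : C :=
  if L is t :: L' then evt x y t + evL x y L' else 0.
Definition dT (kx ky : C) (t : tm) : seq tm :=
  let: (c, e1, e2) := t in
  [:: (c * (1 - e1%:R) * kx, e1.+2, e2); (c * (1 - e2%:R) * ky, e1, e2.+2)].
Fixpoint dL (kx ky : C) (L : seq tm) : seq tm :=
  if L is t :: L' then dT kx ky t ++ dL kx ky L' else [::].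
Fixpoint sumc (L : seq tm) : C := if L is t :: L' then t.1.1 + sumc L' else 0.

Lemma evL_cat x y L1 L2 : evL x y (L1 ++ L2) = evL x y L1 + evL x y L2.
Proof. by elim: L1 => [|t L1 IH] /=; rewrite ?add0r // IH addrA. Qed.

Lemma fx1 e : fx 1 e = 1.
Proof. by case: e => [|e] //=; rewrite expr1n invr1. Qed.

Lemma evL1 L : evL 1 1 L = sumc L.
Proof. by elim: L => [|[[c e1] e2] L IH] //=; rewrite IH /evt /= !fx1 !mulr1. Qed.

Lemma fx_deriv (X : C -> C) (l k : C) (e : nat) : X l != 0 ->
  is_derive l (1 : C) X (k / X l) ->
  is_derive l (1 : C) (fun y => fx (X y) e) ((1 - e%:R) * k * fx (X l) e.+2).
Proof.
move=> X0 h; case: e => [|[|n]] /=.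
- by apply: is_derive_eq h _; rewrite expr1 subr0 mul1r.
- have -> : (fun y : C => (X y ^+ 0)^-1) = cst 1.
    by apply/funext => y; rewrite expr0 invr1.
  by apply: is_derive_eq (is_derive_cst (1 : C) l (1 : C)) _; rewrite subrr !mul0r.
- have Xn : X l ^+ n.+1 != 0 by rewrite expf_neq0.
  have := is_deriveV' (fun y => X y ^+ n.+1) l _ Xn (is_deriveX' _ _ _ n.+1 h).
  move=> hh; apply: is_derive_eq hh _.
  have Xn' : X l ^+ n != 0 by rewrite expf_neq0.
  rewrite /= !exprS !mulrSr; field.
  by rewrite Xn' X0.
Qed.

Lemma evL_deriv (X Y : C -> C) (l kx ky : C) (L : seq tm) :
  X l != 0 -> Y l != 0 ->
  is_derive l (1 : C) X (kx / X l) -> is_derive l (1 : C) Y (ky / Y l) ->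
  is_derive l (1 : C) (fun y => evL (X y) (Y y) L) (evL (X l) (Y l) (dL kx ky L)).
Proof.
move=> X0 Y0 hX hY; elim: L => [|[[c e1] e2] L IH] /=.
  exact: is_derive_cst.
have h1 := fx_deriv _ _ _ e1 X0 hX.
have h2 := fx_deriv _ _ _ e2 Y0 hY.
have ht := is_deriveM' _ _ _ _ _ (is_deriveMc _ _ _ c h1) h2.
apply: is_derive_eq (is_deriveD' _ _ _ _ _ ht IH) _.
rewrite /evt /=; ring.
Qed.

Lemma Im_csqrt_ge0 (z : R[i]) : 0 <= complex.Im (csqrt_up z).
Proof. by rewrite /csqrt_up /= sqrtr_ge0. Qed.

Lemma Im_csqrt_gt0 (z : R[i]) : complex.Re z < 0 -> 0 < complex.Im (csqrt_up z).
Proof.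
case: z => x y /= hx; rewrite sqrtr_gt0 divr_gt0 // subr_gt0.
exact: lt_le_trans hx (sqrtr_ge0 _).
Qed.

Lemma kplus_Im (om : R) (l : C) : complex.Im l < om -> 0 < complex.Im (kplus om l).
Proof. by move=> hl; apply: Im_csqrt_gt0; case: l hl => u v /= hl; lra. Qed.

Lemma kminus_Im (om : R) (l : C) : - complex.Im l < om -> 0 < complex.Im (kminus om l).
Proof. by move=> hl; apply: Im_csqrt_gt0; case: l hl => u v /= hl; lra. Qed.

Lemma Im_nz (z : R[i]) : 0 < complex.Im z -> z != 0.
Proof. by case: z => u v /= h; rewrite eq_complex /= negb_and (gt_eqF h) orbT. Qed.

Lemma kplus_deriv (om : R) (l : C) : complex.Im l < om ->
  is_derive l (1 : C) (kplus om : C -> C) (- 'i / (2 * kplus om l)).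
Proof.
move=> hl.
have hh : is_derive l (1 : C) (fun z : C => (- (om%:C) - 'i * z : C)) (- 'i).
  have -> : (fun z : C => (- (om%:C) - 'i * z : C)) = (fun z : C => (- (om%:C) + (- 'i) * z : C)).
    by apply/funext => z; rewrite mulNr.
  apply: is_derive_eq (is_deriveD' _ _ _ _ _ (is_derive_cst _ _ _)
     (is_deriveMc _ _ _ (- 'i) (is_derive_id l (1 : C)))) _.
  by rewrite add0r mulr1.
apply: (sq_deriv (kplus om : C -> C) (fun z : C => (- (om%:C) - 'i * z : C))) => //.
- move=> z; exact: csqrt_up_sq.
- move=> z; exact: Im_csqrt_ge0.
- apply: Im_csqrt_gt0; case: l hl {hh} => u v /= hl.
  lra.
Qed.

Lemma kminus_deriv (om : R) (l : C) : - complex.Im l < om ->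
  is_derive l (1 : C) (kminus om : C -> C) ('i / (2 * kminus om l)).
Proof.
move=> hl.
have hh : is_derive l (1 : C) (fun z : C => (- (om%:C) + 'i * z : C)) 'i.
  apply: is_derive_eq (is_deriveD' _ _ _ _ _ (is_derive_cst _ _ _)
     (is_deriveMc _ _ _ 'i (is_derive_id l (1 : C)))) _.
  by rewrite add0r mulr1.
apply: (sq_deriv (kminus om : C -> C) (fun z : C => (- (om%:C) + 'i * z : C))) => //.
- move=> z; exact: csqrt_up_sq.
- move=> z; exact: Im_csqrt_ge0.
- apply: Im_csqrt_gt0; case: l hl {hh} => u v /= hl.
  lra.
Qed.

Definition wc (a : R) : C := 'i * (a / 2)%:C.
Definition kxc (a : R) : C := - 'i / (2 * wc a ^+ 2).
Definition kyc (a : R) : C := 'i / (2 * wc a ^+ 2).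
Definition L0 (a b : R) : seq tm :=
  [:: ((a + b / 2)%:C ^+ 2 - (b / 2)%:C ^+ 2, 1%N, 1%N);
      (- ((a + b / 2)%:C * a%:C), 0%N, 1%N);
      (- ((a + b / 2)%:C * a%:C), 1%N, 0%N);
      (a%:C ^+ 2, 0%N, 0%N)].

Lemma main_derivs (a b : R) : 0 < a ->
  (\forall z \near (0 : C), derivable (Dfun a b) z 1) /\
  (forall k, derive1n k (Dfun a b) 0 = sumc (iter k (dL (kxc a) (kyc a)) (L0 a b))).
Proof.
move=> ha.
set om := a ^+ 2 / 4.
have om0 : 0 < om by rewrite divr_gt0 // exprn_gt0.
set w := wc a.
have i2 : 'i * 'i = -1 :> R[i] by rewrite -expr2 sqr_i.
have w0 : w != 0.
  rewrite /w /wc mulf_neq0 //; first by apply/eqP => /eqP; rewrite eq_complex /= oner_eq0 andbF.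
  by rewrite fmorph_eq0 mulf_neq0 ?invr_eq0 ?pnatr_eq0 // gt_eqF.
have w2 : w ^+ 2 = - (om%:C).
  rewrite /w /wc exprMn expr2 i2 /om mulN1r -rmorphXn /=; congr (- _).
  by apply: congr1; field.
set U := ball (0 : C) (om%:C).
have Uim l : U l -> complex.Im l < om /\ - complex.Im l < om.
  rewrite /U /ball /= sub0r normrN => hl.
  have h1 := Im_le_norm l; have h2 := Im_le_norm (- l); rewrite normrN in h2.
  move: h2; case: l hl h1 => u v /= hl h1 h2.
  by split; rewrite -ltcR; apply: le_lt_trans hl.
have Unb l : U l -> \forall z \near l, U z.
  by move=> Ul; apply: open_nbhs_nbhs; split => //; exact: ball_open.
have U0 : U 0 by rewrite /U /ball /= subrr normr0 ltcR.
have kpnz l : U l -> kplus om l != 0.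
  by move=> /Uim [h1 _]; apply: Im_nz; exact: kplus_Im.
have kmnz l : U l -> kminus om l != 0.
  by move=> /Uim [_ h2]; apply: Im_nz; exact: kminus_Im.
set X := fun l : C => (kplus om l / w : C).
set Y := fun l : C => (kminus om l / w : C).
have Xnz l : U l -> X l != 0 by move=> Ul; rewrite /X mulf_neq0 ?invr_eq0 ?kpnz.
have Ynz l : U l -> Y l != 0 by move=> Ul; rewrite /Y mulf_neq0 ?invr_eq0 ?kmnz.
have dX l : U l -> is_derive l (1 : C) X (kxc a / X l).
  move=> Ul; have [h1 _] := Uim l Ul.
  have hk := is_deriveMc _ _ _ (w^-1) (kplus_deriv om l h1).
  have -> : X = (fun y : C => w^-1 * kplus om y) by apply/funext => y; rewrite /X mulrC.
  apply: is_derive_eq hk _; rewrite /kxc -/w /X.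
  by field; rewrite w0 kpnz.
have dY l : U l -> is_derive l (1 : C) Y (kyc a / Y l).
  move=> Ul; have [_ h2] := Uim l Ul.
  have hk := is_deriveMc _ _ _ (w^-1) (kminus_deriv om l h2).
  have -> : Y = (fun y : C => w^-1 * kminus om y) by apply/funext => y; rewrite /Y mulrC.
  apply: is_derive_eq hk _; rewrite /kyc -/w /Y.
  by field; rewrite w0 kmnz.
have w20 : 2 * w != 0 by rewrite mulf_neq0 // pnatr_eq0.
have iw : 'i * (2 * w) = - a%:C.
  rewrite /w /wc; transitivity (2 * ('i * 'i) * (a / 2)%:C); first by ring.
  by rewrite i2 fmorph_div /= rmorph_nat; field.
have hi : 'i = - a%:C / (2 * w) by rewrite -iw mulfK.
have hA : a%:C ^+ 2 = -4 * w ^+ 2.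
  by rewrite w2 /om fmorph_div rmorphXn /= rmorph_nat; field.
have Deq l : Dfun a b l = evL (X l) (Y l) (L0 a b).
  rewrite /Dfun /= /evt /= !expr0 !invr1 -/om /X /Y.
  set p := kplus om l; set q := kminus om l.
  by rewrite -complexiE {1}hi hA; field.
have DE : Dfun a b = (fun l : C => evL (X l) (Y l) (L0 a b)) := funext Deq.
have ind : forall k l, U l -> derive1n k (Dfun a b) l =
    evL (X l) (Y l) (iter k (dL (kxc a) (kyc a)) (L0 a b)).
  elim=> [|k IH] l Ul; first exact: Deq.
  rewrite derive1nS derive1E.
  have hn : \forall y \near l, derive1n k (Dfun a b) y =
      evL (X y) (Y y) (iter k (dL (kxc a) (kyc a)) (L0 a b)).
    by apply: filterS (Unb l Ul); exact: IH.
  rewrite (near_eq_derive (1 : C) hn).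
  case: (evL_deriv X Y l (kxc a) (kyc a) (iter k (dL (kxc a) (kyc a)) (L0 a b))
     (Xnz l Ul) (Ynz l Ul) (dX l Ul) (dY l Ul)) => _ ->.
  by rewrite iterS.
have Imw : complex.Im (- w) = - (a / 2) by rewrite /w /wc /=; ring.
have kp0 : kplus om 0 = w.
  have g2 : kplus om 0 ^+ 2 - w ^+ 2 = 0.
    by rewrite /kplus csqrt_up_sq w2 mulr0 subr0 subrr.
  have gI : 0 < complex.Im (kplus om 0) by apply: kplus_Im; rewrite /=.
  move/eqP: g2; rewrite subr_sqr mulf_eq0 subr_eq0 addr_eq0 => /orP[/eqP //|/eqP e].
  move: gI; rewrite e Imw => h; exfalso; lra.
have km0 : kminus om 0 = w.
  have g2 : kminus om 0 ^+ 2 - w ^+ 2 = 0.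
    by rewrite /kminus csqrt_up_sq w2 mulr0 addr0 subrr.
  have gI : 0 < complex.Im (kminus om 0) by apply: kminus_Im; rewrite /= oppr0.
  move/eqP: g2; rewrite subr_sqr mulf_eq0 subr_eq0 addr_eq0 => /orP[/eqP //|/eqP e].
  move: gI; rewrite e Imw => h; exfalso; lra.
have X0 : X 0 = 1 by rewrite /X kp0 divff.
have Y0 : Y 0 = 1 by rewrite /Y km0 divff.
split.
  apply: filterS (Unb 0 U0) => z Uz; rewrite DE.
  by case: (evL_deriv X Y z (kxc a) (kyc a) (L0 a b) (Xnz z Uz) (Ynz z Uz) (dX z Uz) (dY z Uz)).
by move=> k; rewrite (ind k 0 U0) X0 Y0 evL1.
Qed.

Lemma kxc_neq0 (a : R) : 0 < a -> kxc a != 0.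
Proof.
move=> ha; have i0 : 'i%C != 0 :> R[i].
  by apply/eqP => /eqP; rewrite eq_complex /= oner_eq0 andbF.
have w0 : wc a != 0.
  apply: mulf_neq0; first exact: i0.
  by rewrite fmorph_eq0 mulf_neq0 ?invr_eq0 ?pnatr_eq0 // gt_eqF.
rewrite /kxc; apply: mulf_neq0; first by rewrite oppr_eq0.
by rewrite invr_eq0 mulf_neq0 ?pnatr_eq0 ?expf_neq0.
Qed.

Lemma sums_val (a b : R) :
  [/\ sumc (L0 a b) = 0,
      sumc (iter 1 (dL (kxc a) (kyc a)) (L0 a b)) = 0,
      sumc (iter 2 (dL (kxc a) (kyc a)) (L0 a b)) =
        kxc a ^+ 2 * (2 * a%:C * ((a + b / 2)%:C - 2 * a%:C)),
      sumc (iter 3 (dL (kxc a) (kyc a)) (L0 a b)) = 0 &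
      ((a + b / 2)%:C = 2 * a%:C ->
        sumc (iter 4 (dL (kxc a) (kyc a)) (L0 a b)) = kxc a ^+ 4 * (12 * a%:C ^+ 2))].
Proof.
set al := (a + b / 2)%:C; set A := a%:C; set k := kxc a.
have hky : kyc a = - k by rewrite /k /kxc /kyc mulNr opprK.
have hbe : (b / 2)%:C = al - A by rewrite /al /A -rmorphB /=; apply: congr1; ring.
rewrite /= hky hbe -/al -/A -/k.
split; [ring|ring|ring|ring|].
move=> ->; ring.
Qed.
End S.

Theorem lemmaA2 (R : realType) (a b C a' : R) :
  0 < a -> 0 < C -> b = 2%:R * a' * C ^+ 2 ->
  (a' = a / C ^+ 2 -> zero_of_multiplicity (Dfun a b) 0 4) /\
  (a' != a / C ^+ 2 -> zero_of_multiplicity (Dfun a b) 0 2).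
Proof.
move=> ha hC hb.
have [hnear hk] := @main_derivs R a b ha.
have [s0 s1 s2 s3 s4] := @sums_val R a b.
have k0 := @kxc_neq0 R a ha.
have A0 : a%:C != 0 :> R[i] by rewrite fmorph_eq0 gt_eqF.
have C0 : C ^+ 2 != 0 by rewrite expf_neq0 // gt_eqF.
have hc : (a + b / 2)%:C - 2 * a%:C = (a + b / 2 - 2 * a)%:C :> R[i].
  by rewrite rmorphB rmorphM /= rmorph_nat.
split=> [ha'|ha'].
  have hal : (a + b / 2)%:C = 2 * a%:C :> R[i].
    apply/eqP; rewrite -subr_eq0 hc fmorph_eq0; apply/eqP.
    by rewrite hb ha'; field; rewrite ?C0 ?gt_eqF.
  split=> //; split.
    move=> k; case: k => [|[|[|[|k]]]] // _; rewrite hk.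
    - exact: s0.
    - exact: s1.
    - by rewrite s2 hal subrr !mulr0.
    - exact: s3.
  rewrite hk (s4 hal); apply: mulf_neq0; first exact: expf_neq0.
  by apply: mulf_neq0; [rewrite pnatr_eq0 | exact: expf_neq0].
split=> //; split.
  move=> k; case: k => [|[|k]] // _; rewrite hk.
  - exact: s0.
  - exact: s1.
rewrite hk s2; apply: mulf_neq0; first exact: expf_neq0.
apply: mulf_neq0; first by apply: mulf_neq0; [rewrite pnatr_eq0|].
rewrite hc fmorph_eq0.
apply: contra ha' => /eqP h; apply/eqP.
have e : a' * C ^+ 2 = a.
  rewrite hb in h; transitivity (a + 2 * a' * C ^+ 2 / 2 - 2 * a + a); first by field.
  by rewrite h add0r.
by rewrite -e mulfK.
Qed.
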